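(* $H'$ is a free, infinitely generated monoid. It acts on $\mathcal P$ by left multiplication ($M(x,y,z)^t\in\mathcal P$ for all $M\in H'$, $(x,y,z)\in\mathcal P$), and this action is free in the sense that for each $(x,y,z)\in\mathcal P$ there is a unique $M\in H'$ with $M(1,0,1)^t=(x,y,z)^t$. With respect to this action, $\mathcal P$ (with root $(1,0,1)$) has the structure of the Cayley digraph of $H'$ with respect to a free generating set, which is a regular rooted infinite tree in which every vertex has infinite degree.
   Context: Let $\mathfrak P=\{(x,y,z)\in\mathbb Z_{>0}^3: 2\mid y,\ \gcd(x,y,z)=1,\ x^2+y^2=z^2\}$ and $\mathcal P=\{(x,y,z)\in\mathfrak P:\min\{x,y\}<z/2\}\cup\{(1,0,1)\}$. Let $A=\begin{pmatrix}1&-2&2\\2&-1&2\\2&-2&3\end{pmatrix}$, $B=\begin{pmatrix}1&2&2\\2&1&2\\2&2&3\end{pmatrix}$, $C=\begin{pmatrix}-1&2&2\\-2&1&2\\-2&2&3\end{pmatrix}$, and let $G$ be the monoid generated by $I_3,A,B,C$ under matrix multiplication, acting on triples as column vectors. Let $H$ be the set of all matrices of the forms $A^2NB$, $A^kB$, $ABNB$, $C^2NB$, $C^kB$, $CBNB$, $(AC)^kA^2NB$, $(AC)^kABNB$, $(AC)^kAB$, $(CA)^kC^2NB$, $(CA)^kCBNB$, $(CA)^kCB$, with $N\in G$ and $k\in\mathbb Z_{>0}$, and $H'=H\cup\{I_3\}$. For a monoid with generating set $X$, its Cayley digraph has the elements as vertices and an edge $g\to h$ whenever $h=gx$ for some $x\in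 X$. *)

(* Defs.v *)
From HB Require Import structures.
From mathcomp Require Import all_boot all_order all_algebra.
Set Implicit Arguments. Unset Strict Implicit. Unset Printing Implicit Defensive.
Import Order.TTheory GRing.Theory Num.Theory.
Local Open Scope ring_scope.

Definition mx3 (a b c d e f g h i : int) : 'M[int]_3 :=
  \matrix_(r < 3, s < 3)
    nth 0 (nth [::] [:: [:: a; b; c]; [:: d; e; f]; [:: g; h; i]] r) s.

Definition col3 (x y z : int) : 'cV[int]_3 :=
  \col_(r < 3) nth 0 [:: x; y; z] r.

Definition matA : 'M[int]_3 := mx3 1 (-2) 2 2 (-1) 2 2 (-2) 3.
Definition matB : 'M[int]_3 := mx3 1 2 2 2 1 2 2 2 3.
Definition matC : 'M[int]_3 := mx3 (-1) 2 2 (-2) 1 2 (-2) 2 3.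

Definition inPfrak (x y z : int) : Prop :=
  0 < x /\ 0 < y /\ 0 < z /\ (2 %| y)%Z /\
  gcdz (gcdz x y) z = 1 /\ x ^+ 2 + y ^+ 2 = z ^+ 2.

Definition inP (v : 'cV[int]_3) : Prop :=
  exists x y z : int, v = col3 x y z /\
    ((inPfrak x y z /\ 2 * Num.min x y < z) \/ (x = 1 /\ y = 0 /\ z = 1)).

Inductive inG : 'M[int]_3 -> Prop :=
| inG1 : inG 1%:M
| inGA M : inG M -> inG (M *m matA)
| inGB M : inG M -> inG (M *m matB)
| inGC M : inG M -> inG (M *m matC).

Definition inH (M : 'M[int]_3) : Prop :=
  exists (N : 'M[int]_3) (k : nat), inG N /\ (0 < k)%N /\
  let A := matA in let B := matB in let C := matC in
  (M = A ^+ 2 *m N *m B \/ M = A ^+ k *m B \/ M = A *m B *m N *m B \/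
   M = C ^+ 2 *m N *m B \/ M = C ^+ k *m B \/ M = C *m B *m N *m B \/
   M = (A *m C) ^+ k *m A ^+ 2 *m N *m B \/
   M = (A *m C) ^+ k *m A *m B *m N *m B \/
   M = (A *m C) ^+ k *m A *m B \/
   M = (C *m A) ^+ k *m C ^+ 2 *m N *m B \/
   M = (C *m A) ^+ k *m C *m B *m N *m B \/
   M = (C *m A) ^+ k *m C *m B).

Definition inH' (M : 'M[int]_3) : Prop := inH M \/ M = 1%:M.

Definition mprod (s : seq 'M[int]_3) : 'M[int]_3 := foldr (@mulmx _ _ _ _) 1%:M s.

Definition infinite_set (T : eqType) (S : T -> Prop) : Prop :=
  forall s : seq T, exists x, S x /\ x \notin s.

Definition cayley_edge (X : 'M[int]_3 -> Prop) (g h : 'M[int]_3) : Prop :=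
  exists x, X x /\ h = g *m x.

Inductive reach (E : 'M[int]_3 -> 'M[int]_3 -> Prop) (g : 'M[int]_3)
  : 'M[int]_3 -> Prop :=
| reach_refl : reach E g g
| reach_step h k : reach E g h -> E h k -> reach E g k.

Definition all_Prop (T : eqType) (X : T -> Prop) (s : seq T) : Prop :=
  forall x, x \in s -> X x.

(* Main.v *)
Require Import Defs.
From HB Require Import structures.
From mathcomp Require Import all_boot all_order all_algebra.
Import Order.TTheory GRing.Theory Num.Theory.
From Stdlib Require Import ZArith Lia Classical.

Local Open Scope Z_scope.

Inductive letter := LA | LB | LC.

Definition trip := (Z * Z * Z)%type.

Definition fl (l : letter) (t : trip) : trip :=
  let '(x, y, z) := t in
  match l with
  | LA => (x - 2*y + 2*z, 2*x - y + 2*z, 2*x - 2*y + 3*z)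
  | LB => (x + 2*y + 2*z, 2*x + y + 2*z, 2*x + 2*y + 3*z)
  | LC => (-x + 2*y + 2*z, -2*x + y + 2*z, -2*x + 2*y + 3*z)
  end.

Definition run (w : list letter) (t : trip) : trip := List.fold_right fl t w.
Definition T0 : trip := (3, 4, 5).

Definition step (l : letter) (s : bool * bool) : bool * bool :=
  match l with
  | LA => (negb (snd s), true)
  | LB => (true, true)
  | LC => (true, negb (fst s))
  end.
Definition st (w : list letter) : bool * bool := List.fold_right step (true, true) w.
Definition good (w : list letter) : Prop := st w <> (true, true).

Definition copZ (x y z : Z) : Prop :=
  forall d, (d | x) -> (d | y) -> (d | z) -> (d | 1).

Definition InvP (x y z : Z) : Prop :=
  0 < x /\ 0 < y /\ 0 < z /\ (2 | y) /\ copZ x y z /\ x*x + y*y = z*z.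

Definition Inv (t : trip) : Prop :=
  let '(x, y, z) := t in
  0 < x < z /\ 0 < y < z /\ (exists q, x = 2*q+1) /\ (exists q, y = 2*q) /\
  copZ x y z /\ x*x + y*y = z*z.

Lemma fl_pos l x y z : 0 < x < z -> 0 < y < z ->
  let '(x', y', z') := fl l (x, y, z) in 0 < x' < z' /\ 0 < y' < z' /\ z < z'.
Proof. destruct l; cbn [fl]; intros; repeat split; lia. Qed.

Lemma div_comb d a b c : (d | a) -> (d | b) -> (d | c) ->
  forall p q r, (d | p*a + q*b + r*c).
Proof.
  intros Ha Hb Hc p q r.
  apply Z.divide_add_r; [apply Z.divide_add_r|]; apply Z.divide_mul_r; auto.
Qed.

Lemma cop_fl l x y z : copZ x y z ->
  let '(x', y', z') := fl l (x, y, z) in copZ x' y' z'.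
Proof.
  unfold copZ; destruct l; cbn [fl]; intros H d H1 H2 H3; apply H.
  - replace x with (1*(x - 2*y + 2*z) + 2*(2*x - y + 2*z) + (-2)*(2*x - 2*y + 3*z)) by ring;
      apply div_comb; auto.
  - replace y with ((-2)*(x - 2*y + 2*z) + (-1)*(2*x - y + 2*z) + 2*(2*x - 2*y + 3*z)) by ring;
      apply div_comb; auto.
  - replace z with ((-2)*(x - 2*y + 2*z) + (-2)*(2*x - y + 2*z) + 3*(2*x - 2*y + 3*z)) by ring;
      apply div_comb; auto.
  - replace x with (1*(x + 2*y + 2*z) + 2*(2*x + y + 2*z) + (-2)*(2*x + 2*y + 3*z)) by ring;
      apply div_comb; auto.
  - replace y with (2*(x + 2*y + 2*z) + 1*(2*x + y + 2*z) + (-2)*(2*x + 2*y + 3*z)) by ring;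
      apply div_comb; auto.
  - replace z with ((-2)*(x + 2*y + 2*z) + (-2)*(2*x + y + 2*z) + 3*(2*x + 2*y + 3*z)) by ring;
      apply div_comb; auto.
  - replace x with ((-1)*(-x + 2*y + 2*z) + (-2)*(-2*x + y + 2*z) + 2*(-2*x + 2*y + 3*z)) by ring;
      apply div_comb; auto.
  - replace y with (2*(-x + 2*y + 2*z) + 1*(-2*x + y + 2*z) + (-2)*(-2*x + 2*y + 3*z)) by ring;
      apply div_comb; auto.
  - replace z with ((-2)*(-x + 2*y + 2*z) + (-2)*(-2*x + y + 2*z) + 3*(-2*x + 2*y + 3*z)) by ring;
      apply div_comb; auto.
Qed.

Lemma Inv_fl l t : Inv t -> Inv (fl l t).
Proof.
  destruct t as [[x y] z]; intros (Hx & Hy & [qx Ex] & [qy Ey] & Hc & He).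
  pose proof (fl_pos l x y z Hx Hy) as Hp.
  pose proof (cop_fl l x y z Hc) as Hc'.
  destruct l; cbn [fl] in *; repeat split; try lia; auto.
  all: first [ exists (qx - 2*qy + z); lia | exists (2*qx + 1 - qy + z); lia
             | exists (qx + 2*qy + z); lia | exists (2*qx + 1 + qy + z); lia
             | exists (- qx - 1 + 2*qy + z); lia | exists (-2*qx - 1 + qy + z); lia
             | nia ].
Qed.

Lemma Inv_T0 : Inv T0.
Proof.
  unfold T0, Inv; repeat split; try lia.
  - exists 1; lia.
  - exists 2; lia.
  - unfold copZ; intros d H1 H2 H3.
    replace 1 with (1*4 + (-1)*3 + 0*5) by ring. 
    apply div_comb; auto.
Qed.

Lemma Inv_run w : Inv (run w T0).
Proof. induction w; cbn [run List.fold_right]; [apply Inv_T0 | apply Inv_fl; auto]. Qed.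

Lemma noeq x y z : Inv (x, y, z) -> 2*x <> z /\ 2*y <> z.
Proof.
  intros (Hx & Hy & [qx Ex] & [qy Ey] & Hc & He); subst x y; split; intro; subst z; nia.
Qed.

Lemma st_corr w : let '(x, y, z) := run w T0 in
  (fst (st w) = true <-> z < 2*x) /\ (snd (st w) = true <-> z < 2*y).
Proof.
  induction w as [|l w IH].
  - cbn; split; split; intros; auto; lia.
  - pose proof (Inv_run w) as HI.
    change (run (l :: w) T0) with (fl l (run w T0)).
    change (st (l :: w)) with (step l (st w)).
    destruct (run w T0) as [[x y] z].
    pose proof (noeq _ _ _ HI) as [N1 N2].
    destruct HI as (Hx & Hy & _).
    destruct (st w) as [a g]; cbn [fst snd] in IH.
    destruct IH as [IH1 IH2].
    destruct l, a, g; cbn [fl step fst snd negb]; split; split; intros;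
      try reflexivity; try discriminate;
      try (assert (z < 2*x) by (apply IH1; reflexivity));
      try (assert (z < 2*y) by (apply IH2; reflexivity));
      try lia;
      try (assert (false = true) by (first [apply IH1 | apply IH2]; lia); discriminate).
Qed.

Lemma good_iff w : let '(x, y, z) := run w T0 in
  good w <-> (2*x < z \/ 2*y < z).
Proof.
  pose proof (st_corr w) as H. pose proof (Inv_run w) as HI. unfold good.
  destruct (run w T0) as [[x y] z].
  pose proof (noeq _ _ _ HI) as [N1 N2].
  destruct (st w) as [a g]; cbn [fst snd] in H; destruct H as [H1 H2].
  destruct a, g; split; intros; try congruence.
  - exfalso. assert (z < 2*x) by (apply H1; auto). assert (z < 2*y) by (apply H2; auto). lia.
  - right. assert (~ z < 2*y) by (intro Hc; apply H2 in Hc; discriminate). lia.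
  - left. assert (~ z < 2*x) by (intro Hc; apply H1 in Hc; discriminate). lia.
  - left. assert (~ z < 2*x) by (intro Hc; apply H1 in Hc; discriminate). lia.
Qed.

Lemma zge w : let '(_, _, z) := run w T0 in 5 <= z.
Proof.
  induction w as [|l w IH]; [cbn; lia|].
  pose proof (Inv_run w) as HI.
  change (run (l :: w) T0) with (fl l (run w T0)).
  destruct (run w T0) as [[x y] z].
  destruct HI as (Hx & Hy & _).
  pose proof (fl_pos l x y z Hx Hy) as Hp.
  destruct (fl l (x, y, z)) as [[x' y'] z']. lia.
Qed.

Lemma fl_inj a b x1 y1 z1 x2 y2 z2 :
  0 < x1 < z1 -> 0 < y1 < z1 -> 0 < x2 < z2 -> 0 < y2 < z2 ->
  fl a (x1, y1, z1) = fl b (x2, y2, z2) -> a = b /\ (x1, y1, z1) = (x2, y2, z2).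
Proof.
  intros H1 H2 H3 H4 E.
  destruct a, b; cbn [fl] in E;
    pose proof (f_equal (fun t => fst (fst t)) E) as E1;
    pose proof (f_equal (fun t => snd (fst t)) E) as E2;
    pose proof (f_equal (fun t => snd t) E) as E3; cbn [fst snd] in E1, E2, E3;
    first [ exfalso; lia | split; [reflexivity | f_equal; [f_equal|]; lia] ].
Qed.

Lemma run_inj w1 w2 : run w1 T0 = run w2 T0 -> w1 = w2.
Proof.
  revert w2; induction w1 as [|a w1 IH]; intros [|b w2] E.
  - reflexivity.
  - exfalso. pose proof (Inv_run w2) as HI. pose proof (zge w2) as HZ.
    change (run (b :: w2) T0) with (fl b (run w2 T0)) in E.
    destruct (run w2 T0) as [[x y] z]. destruct HI as (Hx & Hy & _).
    pose proof (fl_pos b x y z Hx Hy) as Hp.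
    rewrite <- E in Hp. cbn in Hp. lia.
  - exfalso. pose proof (Inv_run w1) as HI. pose proof (zge w1) as HZ.
    change (run (a :: w1) T0) with (fl a (run w1 T0)) in E.
    destruct (run w1 T0) as [[x y] z]. destruct HI as (Hx & Hy & _).
    pose proof (fl_pos a x y z Hx Hy) as Hp.
    rewrite E in Hp. cbn in Hp. lia.
  - change (run (a :: w1) T0) with (fl a (run w1 T0)) in E.
    change (run (b :: w2) T0) with (fl b (run w2 T0)) in E.
    pose proof (Inv_run w1) as HI1. pose proof (Inv_run w2) as HI2.
    destruct (run w1 T0) as [[x1 y1] z1] eqn:R1.
    destruct (run w2 T0) as [[x2 y2] z2] eqn:R2.
    destruct HI1 as (Hx1 & Hy1 & _). destruct HI2 as (Hx2 & Hy2 & _).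
    destruct (fl_inj _ _ _ _ _ _ _ _ Hx1 Hy1 Hx2 Hy2 E) as [-> E'].
    f_equal. apply IH. rewrite R2. exact E'.
Qed.

Ltac divtac := repeat match goal with
  | |- (_ | _ + _) => apply Z.divide_add_r
  | |- (_ | _ - _) => apply Z.divide_sub_r
  | |- (_ | - _) => apply (proj2 (Z.divide_opp_r _ _))
  | |- (_ | _ * _) => apply Z.divide_mul_r
  | |- _ => assumption
  end.

Lemma cop_back l a b c : (let '(x, y, z) := fl l (a, b, c) in copZ x y z) -> copZ a b c.
Proof.
  destruct l; cbn [fl]; unfold copZ; intros H d Ha Hb Hc; apply H; divtac.
Qed.

Lemma not_div2_1 : ~ (2 | 1).
Proof. intro H. apply Z.divide_1_r in H. lia. Qed.

Lemma L_sq1 x y z : 0 < x -> 0 < y -> 0 < z -> x*x+y*y = z*z -> z < x + y.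
Proof. intros. nia. Qed.
Lemma L_sq2 x y z : 0 < x -> 0 < y -> 0 < z -> x*x+y*y = z*z -> 2*x + 2*y < 3*z.
Proof. intros. pose proof (Z.square_nonneg (x-y)).
  assert ((2*x+2*y)*(2*x+2*y) < (3*z)*(3*z)) by nia. nia. Qed.
Lemma L_par qx qy qz : (2*qx)*(2*qx) + (2*qy)*(2*qy) = (2*qz+1)*(2*qz+1) -> False.
Proof. intros. nia. Qed.
Lemma L_eq x y z : x*x+y*y = z*z -> (x + 2*y - 2*z)*(x + 2*y - 2*z) + (2*x + y - 2*z)*(2*x + y - 2*z) = (3*z - 2*x - 2*y)*(3*z - 2*x - 2*y).
Proof. intros. nia. Qed.
Lemma L_base x y z : 0 < y -> 2*x + y - 2*z = 0 -> x*x+y*y = z*z -> 3*y = 4*x.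
Proof. intros Hy Hb He. assert (Hz: 2*z = 2*x+y) by lia.
 assert (H: 4*(x*x+y*y) = (2*x+y)*(2*x+y)) by (rewrite <- Hz; nia).
 assert (y*(3*y-4*x) = 0) by nia. apply Z.mul_eq_0 in H0. lia. Qed.
Lemma L_neg x y z : 0 < x -> 0 < y -> 0 < z -> x*x+y*y = z*z -> x + 2*y < 2*z -> 2*x + y < 2*z -> False.
Proof. intros.
 assert ((x+2*y)*(x+2*y) < (2*z)*(2*z)) by nia.
 assert ((2*x+y)*(2*x+y) < (2*z)*(2*z)) by nia.
 assert (4*y < 3*x) by nia. assert (4*x < 3*y) by nia. lia. Qed.

Lemma descent n : forall x y z, z < Z.of_nat n -> InvP x y z ->
  exists w, run w T0 = (x, y, z).
Proof.
  induction n as [|n IH]; intros x y z Hn (Hx & Hy & Hz & [qy Ey] & Hc & He).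
  - lia.
  - assert (Hxo : exists qx, x = 2*qx+1).
    { destruct (Z.Even_or_Odd x) as [[qx Ex]|[qx Ex]]; [|exists qx; exact Ex].
      exfalso. destruct (Z.Even_or_Odd z) as [[qz Ez]|[qz Ez]].
      - apply not_div2_1, Hc; [exists qx | exists qy | exists qz]; lia.
      - subst x y z. rewrite !(Z.mul_comm _ 2) in He. eapply L_par; exact He. }
    destruct Hxo as [qx Ex].
    pose proof (L_sq1 x y z Hx Hy Hz He) as Hs.
    pose proof (L_sq2 x y z Hx Hy Hz He) as Hs2.
    pose proof (L_eq x y z He) as He'.
    set (a := x + 2*y - 2*z) in *. set (b := 2*x + y - 2*z) in *. set (z' := 3*z - 2*x - 2*y) in *.
    assert (Ha0 : a <> 0) by (unfold a; lia).
    destruct (Z.eq_dec b 0) as [Hb0|Hb0].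
    +
      exists nil. pose proof (L_base x y z Hy Hb0 He) as H3.
      assert (Hk : (y - x | 1)) by (apply Hc; [exists 3 | exists 4 | exists 5]; unfold b in Hb0; lia).
      apply Z.divide_1_r in Hk. cbn. unfold b in Hb0. assert (x = 3 /\ y = 4 /\ z = 5) as (-> & -> & ->) by lia; reflexivity.
    + assert (Hz' : 0 < z' < z) by (unfold z'; lia).
      assert (Hn' : z' < Z.of_nat n) by lia.
      assert (Hdb : (2 | b)) by (exists (2*qx + 1 + qy - z); unfold b; lia).
      assert (Hdb' : (2 | -b)) by (apply Z.divide_opp_r; exact Hdb).
      assert (case_ab : (0 < a /\ 0 < b) \/ (0 < a /\ b < 0) \/ (a < 0 /\ 0 < b)).
      { destruct (Z.lt_trichotomy a 0) as [Ha|[Ha|Ha]];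
        destruct (Z.lt_trichotomy b 0) as [Hb|[Hb|Hb]]; try lia.
        exfalso. unfold a, b in *. apply (L_neg x y z); auto; lia. }
      destruct case_ab as [[Ha Hb]|[[Ha Hb]|[Ha Hb]]].
      * destruct (IH a b z') as [w Hw]; [lia| |].
        { repeat split; try lia; auto.
          apply (cop_back LB). cbn [fl].
          replace (a + 2*b + 2*z') with x by (unfold a, b, z'; ring).
          replace (2*a + b + 2*z') with y by (unfold a, b, z'; ring).
          replace (2*a + 2*b + 3*z') with z by (unfold a, b, z'; ring). exact Hc. }
        exists (cons LB w). change (run (LB :: w) T0) with (fl LB (run w T0)).
        rewrite Hw. cbn [fl]. unfold a, b, z'. f_equal; [f_equal|]; ring.
      * destruct (IH a (-b) z') as [w Hw]; [lia| |].
        { repeat split; try lia; auto.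
          apply (cop_back LA). cbn [fl].
          replace (a - 2*(-b) + 2*z') with x by (unfold a, b, z'; ring).
          replace (2*a - (-b) + 2*z') with y by (unfold a, b, z'; ring).
          replace (2*a - 2*(-b) + 3*z') with z by (unfold a, b, z'; ring). exact Hc.
          all: try (replace ((-b)*(-b)) with (b*b) by ring; exact He'). }
        exists (cons LA w). change (run (LA :: w) T0) with (fl LA (run w T0)).
        rewrite Hw. cbn [fl]. unfold a, b, z'. f_equal; [f_equal|]; ring.
      * destruct (IH (-a) b z') as [w Hw]; [lia| |].
        { repeat split; try lia; auto.
          apply (cop_back LC). cbn [fl].
          replace (- - a + 2*b + 2*z') with x by (unfold a, b, z'; ring).
          replace (-2*(-a) + b + 2*z') with y by (unfold a, b, z'; ring).
          replace (-2*(-a) + 2*b + 3*z') with z by (unfold a, b, z'; ring). exact Hc.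
          all: try (replace ((-a)*(-a)) with (a*a) by ring; exact He'). }
        exists (cons LC w). change (run (LC :: w) T0) with (fl LC (run w T0)).
        rewrite Hw. cbn [fl]. unfold a, b, z'. f_equal; [f_equal|]; ring.
Qed.

Local Close Scope Z_scope.

Definition z_of (a : int) : Z :=
  match a with Posz n => Z.of_nat n | Negz n => (- Z.of_nat n - 1)%Z end.
Definition i_of (z : Z) : int :=
  match z with Z0 => Posz 0 | Zpos p => Posz (Pos.to_nat p) | Zneg p => Negz (Pos.to_nat p).-1 end.

Lemma z_of_i z : z_of (i_of z) = z.
Proof.
  case: z => [|p|p] //=; first by rewrite positive_nat_Z.
  have h := Pos2Nat.is_pos p. rewrite Nat2Z.inj_pred //. rewrite positive_nat_Z. lia.
Qed.

Lemma z_of_inj : injective z_of.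
Proof.
  case=> m [] n /= H; f_equal; lia.
Qed.

Lemma i_of_z a : i_of (z_of a) = a.
Proof. apply: z_of_inj; by rewrite z_of_i. Qed.

Lemma z_of_Posz n : z_of (Posz n) = Z.of_nat n. Proof. by []. Qed.

Lemma z_of_oppP n : z_of (- Posz n)%R = (- Z.of_nat n)%Z.
Proof. case: n => [|n]; first by []. rewrite -NegzE /=. lia. Qed.

Lemma z_of_opp a : z_of (- a)%R = (- z_of a)%Z.
Proof.
  case: a => n; first exact: z_of_oppP.
  rewrite NegzE opprK z_of_oppP /=. lia.
Qed.

Lemma z_of_addPP m n : z_of (Posz m + Posz n)%R = (Z.of_nat m + Z.of_nat n)%Z.
Proof. by rewrite -PoszD /= Nat2Z.inj_add. Qed.

Lemma z_of_addPN m n : z_of (Posz m - Posz n)%R = (Z.of_nat m - Z.of_nat n)%Z.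
Proof.
  case: (leqP n m) => h.
  - have hle : (n <= m)%coq_nat by apply/ssrnat.leP.
    rewrite subzn //= (Nat2Z.inj_sub _ _ hle). lia.
  - have hle : (m <= n)%coq_nat by apply/ssrnat.leP; exact: ltnW.
    rewrite -opprB subzn; last exact: ltnW.
    rewrite z_of_oppP (Nat2Z.inj_sub _ _ hle). lia.
Qed.

Lemma z_of_add a b : z_of (a + b)%R = (z_of a + z_of b)%Z.
Proof.
  have E c : exists n, c = Posz n \/ c = (- Posz n)%R.
    case: c => n; [exists n; by left | exists n.+1; right; by rewrite NegzE].
  case: (E a) => m [->|->]; case: (E b) => n [->|->].
  - by rewrite z_of_addPP.
  - by rewrite z_of_addPN z_of_oppP.
  - rewrite addrC z_of_addPN z_of_oppP. rewrite ?z_of_Posz. lia.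
  - rewrite -opprD -PoszD !z_of_oppP Nat2Z.inj_add. lia.
Qed.

Lemma z_of_mul a b : z_of (a * b)%R = (z_of a * z_of b)%Z.
Proof.
  have E c : exists n, c = Posz n \/ c = (- Posz n)%R.
    case: c => n; [exists n; by left | exists n.+1; right; by rewrite NegzE].
  case: (E a) => m [->|->]; case: (E b) => n [->|->].
  - by rewrite -PoszM /= Nat2Z.inj_mul.
  - rewrite mulrN -PoszM !z_of_oppP !z_of_Posz Nat2Z.inj_mul. lia.
  - rewrite mulNr -PoszM !z_of_oppP !z_of_Posz Nat2Z.inj_mul. lia.
  - rewrite mulrNN -PoszM !z_of_oppP !z_of_Posz Nat2Z.inj_mul. lia.
Qed.

Lemma z_of_sub a b : z_of (a - b)%R = (z_of a - z_of b)%Z.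
Proof. rewrite z_of_add z_of_opp. lia. Qed.

Lemma z_of_ge0 a : (0 <= a)%R <-> (0 <= z_of a)%Z.
Proof. case: a => n /=; split => // H; try lia. Qed.

Lemma z_of_le a b : (a <= b)%R <-> (z_of a <= z_of b)%Z.
Proof. rewrite -subr_ge0 z_of_ge0 z_of_sub. lia. Qed.

Lemma z_of_lt a b : (a < b)%R <-> (z_of a < z_of b)%Z.
Proof.
  rewrite Order.POrderTheory.lt_neqAle. split.
  - move/andP=> [/eqP ne /z_of_le le]. have: z_of a <> z_of b by move=> /z_of_inj. lia.
  - move=> h. apply/andP; split; first by apply/eqP => e; subst; lia.
    apply/z_of_le; lia.
Qed.

Lemma z_of_nat n : z_of (n%:R)%R = Z.of_nat n.
Proof. by rewrite natz. Qed.

Local Open Scope ring_scope.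

Lemma z_of_1 : z_of 1 = 1%Z. Proof. by []. Qed.
Lemma z_of_0 : z_of 0 = 0%Z. Proof. by []. Qed.

Ltac zify_int := rewrite ?(z_of_sub, z_of_add, z_of_mul, z_of_opp, z_of_nat, z_of_1, z_of_0, z_of_i).

Lemma mx_col (a b c d e f g h i x y z : int) :
  mx3 a b c d e f g h i *m col3 x y z =
  col3 (a*x+b*y+c*z) (d*x+e*y+f*z) (g*x+h*y+i*z).
Proof.
  apply/matrixP => r s; rewrite !mxE !big_ord_recl big_ord0 !mxE.
  case: r => [[|[|[|?]]] ?] //=; by rewrite addr0 !addrA.
Qed.

Definition v3 (t : trip) : 'cV[int]_3 := col3 (i_of t.1.1) (i_of t.1.2) (i_of t.2).

Definition matl l := match l with LA => matA | LB => matB | LC => matC end.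

Lemma matl_v3 l t : matl l *m v3 t = v3 (fl l t).
Proof.
  case: t => [[x y] z].
  case: l; rewrite /matl /matA /matB /matC mx_col /v3; cbn [fl fst snd]; congr col3; apply: z_of_inj;
    zify_int; lia.
Qed.

Definition mat (w : seq letter) : 'M[int]_3 := foldr (fun l M => matl l *m M) 1%:M w.

Lemma mat_cat u v : mat (u ++ v) = mat u *m mat v.
Proof. elim: u => [|l u IH] /=; first by rewrite mul1mx. by rewrite IH mulmxA. Qed.

Lemma mat1 l : mat [:: l] = matl l.
Proof. by rewrite /= mulmx1. Qed.

Lemma mat_v3 w t : mat w *m v3 t = v3 (run w t).
Proof.
  elim: w => [|l w IH] /=; first by rewrite mul1mx.
  by rewrite -mulmxA IH matl_v3.
Qed.

Lemma col101 : matB *m col3 1 0 1 = v3 T0.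
Proof.
  rewrite /matB mx_col /v3 /=; congr col3; apply: z_of_inj; zify_int; reflexivity.
Qed.

Lemma v3_inj t1 t2 : v3 t1 = v3 t2 -> t1 = t2.
Proof.
  case: t1 => [[x1 y1] z1]; case: t2 => [[x2 y2] z2] E.
  have E0 := congr1 (fun M : 'cV[int]_3 => M (inord 0) ord0) E.
  have E1 := congr1 (fun M : 'cV[int]_3 => M (inord 1) ord0) E.
  have E2 := congr1 (fun M : 'cV[int]_3 => M (inord 2) ord0) E.
  move: E0 E1 E2; rewrite /v3 /col3 !mxE !inordK //= => E0 E1 E2.
  have := congr1 z_of E0; have := congr1 z_of E1; have := congr1 z_of E2.
  rewrite !z_of_i => -> -> ->. by [].
Qed.

Lemma mat_inj u v : mat u = mat v -> u = v.
Proof.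
  move=> E. apply: run_inj. apply: v3_inj. by rewrite -!mat_v3 E.
Qed.

Lemma inG_mat N : inG N <-> exists w, N = mat w.
Proof.
  split.
  - elim => [|M _ [w ->]|M _ [w ->]|M _ [w ->]]; first by exists [::].
    + exists (w ++ [:: LA]); by rewrite mat_cat mat1.
    + exists (w ++ [:: LB]); by rewrite mat_cat mat1.
    + exists (w ++ [:: LC]); by rewrite mat_cat mat1.
  - move=> [w ->]. elim/last_ind: w => [|w l IH]; first exact: inG1.
    rewrite -cats1 mat_cat mat1. by case: l; constructor.
Qed.

Definition rep k (u : seq letter) := flatten (nseq k u).

Lemma mat_nseq k l : mat (nseq k l) = matl l ^+ k.
Proof.
  elim: k => [|k IH]; first by rewrite expr0.
  by rewrite exprS -mulmxE /= IH.
Qed.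

Lemma mat_rep k u : mat (rep k u) = mat u ^+ k.
Proof.
  elim: k => [|k IH]; first by rewrite expr0.
  by rewrite exprS -mulmxE /rep /= mat_cat -/(rep k u) IH.
Qed.

Definition shapeA (u : seq letter) := exists n k, (0 < k)%nat /\
  (u = nseq 2 LA ++ n \/ u = nseq k LA \/ u = [:: LA; LB] ++ n \/
   u = rep k [:: LA; LC] ++ nseq 2 LA ++ n \/
   u = rep k [:: LA; LC] ++ [:: LA; LB] ++ n \/
   u = rep k [:: LA; LC] ++ [:: LA]).
Definition shapeC (u : seq letter) := exists n k, (0 < k)%nat /\
  (u = nseq 2 LC ++ n \/ u = nseq k LC \/ u = [:: LC; LB] ++ n \/
   u = rep k [:: LC; LA] ++ nseq 2 LC ++ n \/
   u = rep k [:: LC; LA] ++ [:: LC; LB] ++ n \/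
   u = rep k [:: LC; LA] ++ [:: LC]).

Lemma inH_shape M : inH M <-> exists u, (shapeA u \/ shapeC u) /\ M = mat u *m matB.
Proof.
  split.
  - move=> [N [k [/inG_mat [n ->] [kp H]]]].
    have eA : matA = mat [:: LA] by rewrite mat1.
    have eC : matC = mat [:: LC] by rewrite mat1.
    have eB : matB = mat [:: LB] by rewrite mat1.
    have eA2 : matA ^+ 2 = mat (nseq 2 LA) by rewrite mat_nseq.
    have eC2 : matC ^+ 2 = mat (nseq 2 LC) by rewrite mat_nseq.
    have eAk : matA ^+ k = mat (nseq k LA) by rewrite mat_nseq.
    have eCk : matC ^+ k = mat (nseq k LC) by rewrite mat_nseq.
    have eAC : (matA *m matC) ^+ k = mat (rep k [:: LA; LC]) by rewrite mat_rep /= mulmx1.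
    have eCA : (matC *m matA) ^+ k = mat (rep k [:: LC; LA]) by rewrite mat_rep /= mulmx1.
    case: H => [->|[->|[->|[->|[->|[->|[->|[->|[->|[->|[->|->]]]]]]]]]]].
    + exists (nseq 2 LA ++ n); split; last by rewrite eA2 mat_cat.
      left; exists n, k; split => //; by left.
    + exists (nseq k LA); split; last by rewrite eAk.
      left; exists n, k; split => //; right; by left.
    + exists ([:: LA; LB] ++ n); split; last by rewrite mat_cat /= mulmx1 ?mulmxA.
      left; exists n, k; split => //; do 2 right; by left.
    + exists (nseq 2 LC ++ n); split; last by rewrite eC2 mat_cat.
      right; exists n, k; split => //; by left.
    + exists (nseq k LC); split; last by rewrite eCk.
      right; exists n, k; split => //; right; by left.
    + exists ([:: LC; LB] ++ n); split; last by rewrite mat_cat /= mulmx1 ?mulmxA.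
      right; exists n, k; split => //; do 2 right; by left.
    + exists (rep k [:: LA; LC] ++ nseq 2 LA ++ n); split; last by rewrite eAC eA2 !mat_cat ?mulmxA.
      left; exists n, k; split => //; do 3 right; by left.
    + exists (rep k [:: LA; LC] ++ [:: LA; LB] ++ n); split;
        last by rewrite eAC !mat_cat /= mulmx1 ?mulmxA.
      left; exists n, k; split => //; do 4 right; by left.
    + exists (rep k [:: LA; LC] ++ [:: LA]); split; last by rewrite eAC !mat_cat /= mulmx1 ?mulmxA.
      left; exists n, k; split => //; by do 5 right.
    + exists (rep k [:: LC; LA] ++ nseq 2 LC ++ n); split; last by rewrite eCA eC2 !mat_cat ?mulmxA.
      right; exists n, k; split => //; do 3 right; by left.
    + exists (rep k [:: LC; LA] ++ [:: LC; LB] ++ n); split;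
        last by rewrite eCA !mat_cat /= mulmx1 ?mulmxA.
      right; exists n, k; split => //; do 4 right; by left.
    + exists (rep k [:: LC; LA] ++ [:: LC]); split; last by rewrite eCA !mat_cat /= mulmx1 ?mulmxA.
      right; exists n, k; split => //; by do 5 right.
  - move=> [u [[[n [k [kp H]]]|[n [k [kp H]]]] ->]]; exists (mat n), k;
      (split; first by apply/inG_mat; exists n); split => //;
      rewrite /= /matA /matB /matC -/matA -/matB -/matC.
    all: have eAC : (matA *m matC) ^+ k = mat (rep k [:: LA; LC]) by rewrite mat_rep /= mulmx1.
    all: have eCA : (matC *m matA) ^+ k = mat (rep k [:: LC; LA]) by rewrite mat_rep /= mulmx1.
    + case: H => [->|[->|[->|[->|[->|->]]]]].
      * left. by rewrite mat_cat mat_nseq.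
      * right; left. by rewrite mat_nseq.
      * do 2 right; left. by rewrite mat_cat /= mulmx1 ?mulmxA.
      * do 6 right; left. by rewrite eAC !mat_cat mat_nseq ?mulmxA.
      * do 7 right; left. by rewrite eAC !mat_cat /= mulmx1 ?mulmxA.
      * do 8 right; left. by rewrite eAC !mat_cat /= mulmx1 ?mulmxA.
    + case: H => [->|[->|[->|[->|[->|->]]]]].
      * do 3 right; left. by rewrite mat_cat mat_nseq.
      * do 4 right; left. by rewrite mat_nseq.
      * do 5 right; left. by rewrite mat_cat /= mulmx1 ?mulmxA.
      * do 9 right; left. by rewrite eCA !mat_cat mat_nseq ?mulmxA.
      * do 10 right; left. by rewrite eCA !mat_cat /= mulmx1 ?mulmxA.
      * do 11 right. by rewrite eCA !mat_cat /= mulmx1 ?mulmxA.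
Qed.

Local Close Scope ring_scope.

Lemma st_cons l u : st (l :: u) = step l (st u). Proof. by []. Qed.

Lemma st_cat u v : st (u ++ v) = foldr step (st v) u.
Proof. elim: u => [|l u IH] //. by rewrite cat_cons st_cons IH. Qed.

Lemma st_ff u : st u <> (false, false).
Proof. case: u => [|l u] //. rewrite st_cons. case: l; case: (st u) => a g //=. Qed.

Lemma rep_S k u : rep k.+1 u = u ++ rep k u. Proof. by []. Qed.

Lemma st_repA k v : st v = (false, true) -> st (rep k [:: LA; LC] ++ v) = (false, true).
Proof.
  move=> H; elim: k => [|k IH] //. by rewrite rep_S -catA st_cat IH.
Qed.
Lemma st_repC k v : st v = (true, false) -> st (rep k [:: LC; LA] ++ v) = (true, false).
Proof.
  move=> H; elim: k => [|k IH] //. by rewrite rep_S -catA st_cat IH.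
Qed.

Lemma shapeA_st u : shapeA u -> st u = (false, true).
Proof.
  move=> [n [k [kp H]]].
  have h2 : st (nseq 2 LA ++ n) = (false, true).
    by rewrite st_cat /=; case: (st n) => [a g].
  have hk : st (nseq k LA) = (false, true).
    clear H; case: k kp => [|k] // _. elim: k => [|k IH]; first by []. change (step LA (st (nseq k.+1 LA)) = (false, true)). by rewrite IH.
  have hb : st ([:: LA; LB] ++ n) = (false, true) by [].
  case: H => [->|[->|[->|[->|[->|->]]]]] //; apply: st_repA => //.
Qed.
Lemma shapeC_st u : shapeC u -> st u = (true, false).
Proof.
  move=> [n [k [kp H]]].
  have h2 : st (nseq 2 LC ++ n) = (true, false).
    by rewrite st_cat /=; case: (st n) => [a g].
  have hk : st (nseq k LC) = (true, false).
    clear H; case: k kp => [|k] // _. elim: k => [|k IH]; first by []. change (step LC (st (nseq k.+1 LC)) = (true, false)). by rewrite IH.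
  have hb : st ([:: LC; LB] ++ n) = (true, false) by [].
  case: H => [->|[->|[->|[->|[->|->]]]]] //; apply: st_repC => //.
Qed.

Lemma shapeA_AC u : shapeA u -> shapeA (LA :: LC :: u).
Proof.
  move=> [n [k [kp H]]].
  case: H => [->|[->|[->|[->|[->|->]]]]].
  - exists n, 1%nat; split => //; do 3 right; left. by [].
  - case: k kp => [|[|k]] // _.
    + exists n, 1%nat; split => //; do 5 right. by [].
    + exists (nseq k LA), 1%nat; split => //; do 3 right; left. by [].
  - exists n, 1%nat; split => //; do 4 right; left. by [].
  - exists n, k.+1; split => //; do 3 right; left. by [].
  - exists n, k.+1; split => //; do 4 right; left. by [].
  - exists n, k.+1; split => //; do 5 right. by [].
Qed.
Lemma shapeC_CA u : shapeC u -> shapeC (LC :: LA :: u).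
Proof.
  move=> [n [k [kp H]]].
  case: H => [->|[->|[->|[->|[->|->]]]]].
  - exists n, 1%nat; split => //; do 3 right; left. by [].
  - case: k kp => [|[|k]] // _.
    + exists n, 1%nat; split => //; do 5 right. by [].
    + exists (nseq k LC), 1%nat; split => //; do 3 right; left. by [].
  - exists n, 1%nat; split => //; do 4 right; left. by [].
  - exists n, k.+1; split => //; do 3 right; left. by [].
  - exists n, k.+1; split => //; do 4 right; left. by [].
  - exists n, k.+1; split => //; do 5 right. by [].
Qed.

Lemma st_shape_gen m u : (size u < m)%nat ->
  (st u = (false, true) -> shapeA u) /\ (st u = (true, false) -> shapeC u).
Proof.
  elim: m u => [|m IH] u hs0 //.
  case: u hs0 => [|l u] hs0; first by split.
  have hs : (size u < m)%nat by [].
  clear hs0. rewrite st_cons.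
  case: l; split => // H.
  - case: u hs H => [|l u] hs H.
    + exists [::], 1%nat; split => //; right; left. by [].
    + case: l hs H => hs H.
      * exists u, 1%nat; split => //; left. by [].
      * exists u, 1%nat; split => //; do 2 right; left. by [].
      * move: H; rewrite st_cons /=.
        case E: (st u) => [a g]; case: a E => E //= _.
        have hu : st u = (false, true).
          by move: E; case: g => // E; exfalso; apply: (st_ff u).
        apply: shapeA_AC. apply: (proj1 (IH u _)) => //.
        by apply: ltnW.
  - case: u hs H => [|l u] hs H.
    + exists [::], 1%nat; split => //; right; left. by [].
    + case: l hs H => hs H.
      * move: H; rewrite st_cons /=.
        case E: (st u) => [a g]; case: g E => E //= _.
        have hu : st u = (true, false).
          by move: E; case: a => // E; exfalso; apply: (st_ff u).
        apply: shapeC_CA. apply: (proj2 (IH u _)) => //.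
        by apply: ltnW.
      * exists u, 1%nat; split => //; do 2 right; left. by [].
      * exists u, 1%nat; split => //; left. by [].
Qed.

Lemma good_shape u : good u <-> shapeA u \/ shapeC u.
Proof.
  split.
  - rewrite /good => H.
    have := st_shape_gen (size u).+1 u (ltnSn _).
    case E: (st u) => [a g]; case: a E; case: g => E [H1 H2] //.
    + by right; apply: H2.
    + by left; apply: H1.
    + by exfalso; apply: (st_ff u).
  - by rewrite /good => [[/shapeA_st -> | /shapeC_st ->]].
Qed.

Definition irr (w : seq letter) : Prop :=
  good w /\ forall w1 w2, w = w1 ++ LB :: w2 -> ~ (good w1 /\ good w2).

Fixpoint allp (P : seq letter -> Prop) (ws : seq (seq letter)) : Prop :=
  match ws with [::] => True | w :: ws => P w /\ allp P ws end.

Lemma allp_cat P us vs : allp P us -> allp P vs -> allp P (us ++ vs).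
Proof. elim: us => [|u us IH] //= [Hu Hus] Hv. split => //. exact: IH. Qed.

Definition cw (ws : seq (seq letter)) : seq letter := flatten (map (fun w => w ++ [:: LB]) ws).

Lemma cw_cons u us : cw (u :: us) = u ++ LB :: cw us.
Proof. by rewrite /cw /= -catA. Qed.

Lemma cw_cat us vs : cw (us ++ vs) = cw us ++ cw vs.
Proof. by rewrite /cw map_cat flatten_cat. Qed.

Lemma st_B u r : st (u ++ LB :: r) = st u.
Proof. elim: u => [|l u IH]; first by []. by rewrite cat_cons !st_cons IH. Qed.

Lemma split_lt (u u' r r' : seq letter) a a' :
  u ++ a :: r = u' ++ a' :: r' -> (size u < size u')%nat ->
  exists m, u' = u ++ a :: m /\ r = m ++ a' :: r'.
Proof.
  elim: u u' => [|x u IH] [|x' u'] //= E H.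
  - exists u'. case: E => -> ->. by [].
  - case: E => -> E. have [m [-> ->]] := IH u' E H. by exists m.
Qed.

Lemma split_eq (u u' r r' : seq letter) a a' :
  u ++ a :: r = u' ++ a' :: r' -> size u = size u' -> u = u' /\ r = r'.
Proof.
  elim: u u' => [|x u IH] [|x' u'] //= E H.
  - by case: E => _ ->.
  - case: E => -> E. case: H => H. have [-> ->] := IH u' E H. by [].
Qed.

Lemma cw_nil_inv ws : cw ws = [::] -> ws = [::].
Proof. case: ws => [|u us] //. rewrite cw_cons. by case: u. Qed.

Lemma factor_unique ws : forall ws', allp irr ws -> allp irr ws' -> cw ws = cw ws' -> ws = ws'.
Proof.
  elim: ws => [|u us IH] [|u' us'] Hw Hw' E //.
  - by move: E; rewrite cw_cons => /(congr1 size); rewrite size_cat addnS.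
  - by move: E; rewrite cw_cons => /(congr1 size); rewrite size_cat addnS.
  - case: Hw => Hu Hus. case: Hw' => Hu' Hus'.
    move: E; rewrite !cw_cons => E.
    have key : forall (u u' : seq letter) us us', irr u -> irr u' -> allp irr us ->
      u ++ LB :: cw us = u' ++ LB :: cw us' -> (size u < size u')%nat -> False.
    { move=> v v' vs vs' Hv Hv' Hvs E' Hlt.
      have [m [Ev' Er]] := split_lt _ _ _ _ _ _ E' Hlt.
      clear E'. case: vs Hvs Er => [|v2 vs2] Hvs Er.
      - by move: Er => /(congr1 size); rewrite size_cat addnS.
      - case: Hvs => Hv2 _.
        move: Er; rewrite cw_cons => Er.
        have gm : good m.
          have := st_B v2 (cw vs2). rewrite Er st_B => Est.
          rewrite /good Est. by case: Hv2.
        case: Hv' => _ Hv'. apply: (Hv' v m Ev'). split => //. by case: Hv. }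
    case: (ltngtP (size u) (size u')) => Hs.
    + exfalso; exact: (key u u' us us' Hu Hu' Hus E Hs).
    + exfalso; exact: (key u' u us' us Hu' Hu Hus' (esym E) Hs).
    + have [-> Er] := split_eq _ _ _ _ _ _ E Hs. by rewrite (IH us').
Qed.

Lemma factor_exists_gen n w : (size w < n)%nat -> good w ->
  exists ws, allp irr ws /\ cw ws = w ++ [:: LB].
Proof.
  elim: n w => [|n IH] w // Hs Hg.
  case: (classic (irr w)) => Hi.
  - exists [:: w]; split; first by [].
    by rewrite /cw /= cats0.
  - have [w1 [w2 [Ew [g1 g2]]]] : exists w1 w2, w = w1 ++ LB :: w2 /\ good w1 /\ good w2.
    { apply: NNPP => Hn. apply: Hi; split => // w1 w2 Ew Hg12.
      apply: Hn. by exists w1, w2. }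
    have s1 : (size w1 < n)%nat.
      move: Hs; rewrite Ew size_cat /= => /ssrnat.leP Hs; apply/ssrnat.leP. rewrite -?plusE in Hs. lia.
    have s2 : (size w2 < n)%nat.
      move: Hs; rewrite Ew size_cat /= => /ssrnat.leP Hs; apply/ssrnat.leP. rewrite -?plusE in Hs. lia.
    have [ws1 [F1 E1]] := IH w1 s1 g1.
    have [ws2 [F2 E2]] := IH w2 s2 g2.
    exists (ws1 ++ ws2); split; first exact: allp_cat.
    by rewrite cw_cat E1 E2 Ew -!catA.
Qed.

Lemma dvd_iff (d x : int) : (x \in dvdz d) <-> Z.divide (z_of d) (z_of x).
Proof.
  split.
  - move/dvdzP => [q ->]. exists (z_of q). by rewrite z_of_mul.
  - move=> [c Ec]. apply/dvdzP. exists (i_of c). apply: z_of_inj.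
    by rewrite z_of_mul z_of_i.
Qed.

Lemma gcd_iff (x y z : int) : gcdz (gcdz x y) z = 1%R <-> copZ (z_of x) (z_of y) (z_of z).
Proof.
  split.
  - move=> H d hx hy hz.
    have hx' : x \in dvdz (i_of d) by apply/dvd_iff; rewrite z_of_i.
    have hy' : y \in dvdz (i_of d) by apply/dvd_iff; rewrite z_of_i.
    have hz' : z \in dvdz (i_of d) by apply/dvd_iff; rewrite z_of_i.
    have : gcdz (gcdz x y) z \in dvdz (i_of d) by rewrite dvdz_gcd dvdz_gcd hx' hy' hz'.
    by rewrite H => /dvd_iff; rewrite z_of_i.
  - move=> H.
    set g := gcdz (gcdz x y) z.
    have gx : x \in dvdz g by apply: (dvdz_trans (dvdz_gcdl _ z)); apply: dvdz_gcdl.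
    have gy : y \in dvdz g by apply: (dvdz_trans (dvdz_gcdl _ z)); apply: dvdz_gcdr.
    have gz : z \in dvdz g by apply: dvdz_gcdr.
    have h1 := H (z_of g) (proj1 (dvd_iff _ _) gx) (proj1 (dvd_iff _ _) gy) (proj1 (dvd_iff _ _) gz).
    have hpos : (0 <= z_of g)%Z by rewrite /g /gcdz z_of_Posz; lia.
    apply: z_of_inj. apply Z.divide_1_r in h1. rewrite z_of_1. lia.
Qed.

Lemma frak_iff (x y z : int) : inPfrak x y z <-> InvP (z_of x) (z_of y) (z_of z).
Proof.
  rewrite /inPfrak /InvP gcd_iff.
  have e2 : z_of 2 = 2%Z by rewrite z_of_nat.
  have eq : (x ^+ 2 + y ^+ 2 = z ^+ 2)%R <-> (z_of x * z_of x + z_of y * z_of y = z_of z * z_of z)%Z.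
    rewrite !expr2; split => [E|E].
    - by rewrite -!z_of_mul -z_of_add E.
    - apply: z_of_inj. by rewrite z_of_add !z_of_mul.
  have lt0 a : (0 < a)%R <-> (0 < z_of a)%Z by rewrite z_of_lt z_of_0.
  rewrite eq !lt0 dvd_iff e2. by [].
Qed.

Lemma min_iff (x y z : int) :
  (2 * Num.min x y < z)%R <-> (2 * z_of x < z_of z \/ 2 * z_of y < z_of z)%Z.
Proof.
  have e2 : z_of 2 = 2%Z by rewrite z_of_nat.
  case: (ltrP x y) => h.
  - move/z_of_lt: h => h. rewrite z_of_lt z_of_mul e2. lia.
  - move/z_of_le: h => h. rewrite z_of_lt z_of_mul e2. lia.
Qed.

Local Open Scope ring_scope.

Lemma inH_good M : inH M <-> exists u, good u /\ M = mat u *m matB.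
Proof.
  rewrite inH_shape. split => [[u [H ->]]|[u [H ->]]]; exists u; split => //; exact/good_shape.
Qed.

Lemma inH'_good M : inH' M <-> M = 1%:M \/ exists u, good u /\ M = mat u *m matB.
Proof. rewrite /inH' inH_good. split => [[]|[]]; by [right|left|right|left]. Qed.

Lemma matB_cat u : mat (u ++ [:: LB]) = mat u *m matB.
Proof. by rewrite mat_cat mat1. Qed.

Lemma img u : mat u *m matB *m col3 1 0 1 = v3 (run u T0).
Proof. by rewrite -mulmxA col101 mat_v3. Qed.

Lemma root_v3 : col3 1 0 1 = v3 (1%Z, 0%Z, 1%Z).
Proof. by []. Qed.

Lemma run_not_root u : run u T0 <> (1%Z, 0%Z, 1%Z).
Proof.
  have := Inv_run u. case: (run u T0) => [[x y] z] [_ [Hy _]] E.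
  case: E => _ E _. lia.
Qed.

Lemma Pimg u : good u -> inP (v3 (run u T0)).
Proof.
  move=> Hg.
  have HI := Inv_run u. have Hgi := good_iff u.
  case E: (run u T0) HI Hgi => [[x y] z] HI Hgi.
  exists (i_of x), (i_of y), (i_of z); split; first by [].
  left; split.
  - apply/frak_iff; rewrite !z_of_i.
    case: HI => [[hx hxz] [[hy hyz] [_ [[q Eq] [Hc He]]]]].
    repeat split; try lia; auto. exists q; lia.
  - apply/min_iff; rewrite !z_of_i. exact/Hgi.
Qed.

Lemma Proot : inP (col3 1 0 1).
Proof. exists 1, 0, 1; split => //. by right. Qed.

Lemma Pinv v : inP v -> v = col3 1 0 1 \/ exists u, good u /\ v = v3 (run u T0).
Proof.
  move=> [x [y [z [-> [[Hf Hm]|[-> [-> ->]]]]]]]; last by left.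
  right. move/frak_iff: Hf => Hf. move/min_iff: Hm => Hm.
  have [u Hu] : exists u, run u T0 = (z_of x, z_of y, z_of z).
    apply: (descent (Z.to_nat (z_of z)).+1) => //. case: Hf => _ [_ [hz _]]. lia.
  exists u; split.
  - have := good_iff u. rewrite Hu => ->. exact Hm.
  - by rewrite Hu /v3 /= !i_of_z.
Qed.

Lemma P2 M N : inH' M -> inH' N -> inH' (M *m N).
Proof.
  rewrite !inH'_good => [[->|[u [gu ->]]] [->|[v [gv ->]]]].
  - by left; rewrite mulmx1.
  - by right; exists v; rewrite mul1mx.
  - by right; exists u; rewrite mulmx1.
  - right; exists (u ++ LB :: v); split.
    + by rewrite /good st_B.
    + by rewrite mat_cat /= !mulmxA.
Qed.

Lemma P4 v : inP v -> exists! M, inH' M /\ M *m col3 1 0 1 = v.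
Proof.
  move=> /Pinv [->|[u [gu ->]]].
  - exists 1%:M; split; first by split; [right|rewrite mul1mx].
    move=> M' [/inH'_good [->|[u [gu ->]]] E] //.
    exfalso. move: E; rewrite img root_v3 => /v3_inj. exact: run_not_root.
  - exists (mat u *m matB); split.
    + split; first by apply/inH'_good; right; exists u.
      exact: img.
    + move=> M' [/inH'_good [->|[u' [gu' ->]]] E].
      * exfalso. move: E; rewrite mul1mx root_v3 => /v3_inj E. exact: (run_not_root u).
      * move: E; rewrite img => /v3_inj /run_inj ->. by [].
Qed.

Lemma P3 M v : inH' M -> inP v -> inP (M *m v).
Proof.
  move=> HM Hv. have [M0 [[H0 E0] _]] := P4 v Hv.
  rewrite -E0 mulmxA. have := P2 M M0 HM H0.
  move/inH'_good => [->|[u [gu ->]]]; first by rewrite mul1mx; exact: Proot.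
  rewrite img. exact: Pimg.
Qed.

Definition mB (w : seq letter) : 'M[int]_3 := mat w *m matB.
Definition Xg (M : 'M[int]_3) : Prop := exists w, irr w /\ M = mB w.

Lemma inf_of_inj (S : 'M[int]_3 -> Prop) (f : nat -> 'M[int]_3) :
  injective f -> (forall n, S (f n)) -> infinite_set S.
Proof.
  move=> fi fS s. apply: NNPP => H.
  have sub : {subset [seq f i | i <- iota 0 (size s).+1] <= s}.
    move=> x /mapP [i _ ->]. apply: NNPP => Hn. apply: H. exists (f i); split => //.
    by apply/negP.
  have := uniq_leq_size _ sub. rewrite size_map size_iota map_inj_uniq // iota_uniq.
  move=> /(_ isT). by rewrite ltnn.
Qed.

Lemma allX_inv s : all_Prop Xg s -> exists ws, allp irr ws /\ s = map mB ws.
Proof.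
  elim: s => [|x s IH] H; first by exists [::].
  have [w [iw ->]] : Xg x by apply: H; rewrite mem_head.
  have [ws [iws ->]] : exists ws, allp irr ws /\ s = map mB ws.
    apply: IH => y hy. apply: H. by rewrite in_cons hy orbT.
  by exists (w :: ws).
Qed.

Lemma allX_map ws : allp irr ws -> all_Prop Xg (map mB ws).
Proof.
  elim: ws => [|w ws IH] /=; first by [].
  move=> [iw iws] y. rewrite in_cons => /orP [/eqP ->|hy]; first by exists w.
  exact: IH.
Qed.

Lemma mprod_map ws : mprod (map mB ws) = mat (cw ws).
Proof.
  elim: ws => [|w ws IH]; first by [].
  by rewrite /= IH cw_cons mat_cat /mB /= mulmxA.
Qed.

Lemma uf s s' : all_Prop Xg s -> all_Prop Xg s' -> mprod s = mprod s' -> s = s'.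
Proof.
  move=> /allX_inv [ws [iws ->]] /allX_inv [ws' [iws' ->]].
  rewrite !mprod_map => /mat_inj E. by rewrite (factor_unique ws ws' iws iws' E).
Qed.

Lemma factor M : inH' M -> exists s, all_Prop Xg s /\ M = mprod s.
Proof.
  move/inH'_good => [->|[u [gu ->]]]; first by exists [::].
  have [ws [iws E]] := factor_exists_gen (size u).+1 u (ltnSn _) gu.
  exists (map mB ws); split; first exact: allX_map.
  by rewrite mprod_map E matB_cat.
Qed.

Lemma irr_good w : irr w -> good w. Proof. by case. Qed.

Lemma X_inH' x : Xg x -> inH' x.
Proof. move=> [w [iw ->]]. apply/inH'_good; right; exists w; split => //; exact: irr_good. Qed.

Lemma mprod_rcons s x : mprod (rcons s x) = mprod s *m x.
Proof. elim: s => [|y s IH] /=; first by rewrite mulmx1 mul1mx. by rewrite IH mulmxA. Qed.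

Lemma allX_rcons s x : all_Prop Xg (rcons s x) -> all_Prop Xg s /\ Xg x.
Proof.
  move=> H; split.
  - move=> y hy; apply: H; by rewrite mem_rcons in_cons hy orbT.
  - apply: H; by rewrite mem_rcons mem_head.
Qed.

Lemma allX_rcons' s x : all_Prop Xg s -> Xg x -> all_Prop Xg (rcons s x).
Proof.
  move=> H hx y; rewrite mem_rcons in_cons => /orP [/eqP ->|hy] //. exact: H.
Qed.

Lemma mprod_inH' s : all_Prop Xg s -> inH' (mprod s).
Proof.
  elim: s => [|x s IH] H; first by right.
  apply: P2; first by apply: X_inH'; apply: H; rewrite mem_head.
  apply: IH => y hy; apply: H; by rewrite in_cons hy orbT.
Qed.

Lemma nseq_noB k w1 w2 : nseq k LA <> w1 ++ LB :: w2.
Proof.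
  elim: k w1 => [|k IH] [|l w1] //= E. case: E => _ E. exact: (IH w1).
Qed.

Lemma irr_A k : irr (nseq k.+1 LA).
Proof.
  split; last by move=> w1 w2 /nseq_noB.
  apply/good_shape; left. exists [::], k.+1; split => //. by right; left.
Qed.

Definition xA (k : nat) : 'M[int]_3 := mB (nseq k.+1 LA).

Lemma xA_inj : injective xA.
Proof.
  move=> i j. rewrite /xA /mB -!matB_cat => /mat_inj /(congr1 size).
  rewrite !size_cat !size_nseq. by move=> /addIn [].
Qed.

Lemma xA_X k : Xg (xA k). Proof. exists (nseq k.+1 LA); split => //; exact: irr_A. Qed.

Lemma cancel_left g x y : inH' g -> Xg x -> Xg y -> g *m x = g *m y -> x = y.
Proof.
  move=> /factor [s [hs ->]] hx hy E.
  have := uf (rcons s x) (rcons s y) (allX_rcons' _ _ hs hx) (allX_rcons' _ _ hs hy).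
  rewrite !mprod_rcons => /(_ E) /rcons_inj. by case.
Qed.

Theorem theorem2p2 :
  inH' 1%:M /\
  (forall M N, inH' M -> inH' N -> inH' (M *m N)) /\
  (forall M v, inH' M -> inP v -> inP (M *m v)) /\
  (forall v, inP v -> exists! M, inH' M /\ M *m col3 1 0 1 = v) /\
  (exists X : 'M[int]_3 -> Prop,
     (forall x, X x -> inH' x) /\
     infinite_set X /\
     (forall M, inH' M -> exists! s : seq 'M[int]_3, all_Prop X s /\ M = mprod s) /\
     (forall M, inH' M -> reach (cayley_edge X) 1%:M M) /\
     (forall g, inH' g -> ~ cayley_edge X g 1%:M) /\
     (forall h, inH' h -> h <> 1%:M ->
        exists! g, inH' g /\ cayley_edge X g h) /\
     (forall g x y, inH' g -> X x -> X y -> g *m x = g *m y -> x = y) /\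
     (forall g, inH' g -> infinite_set (cayley_edge X g))).
Proof.
  split; first by right.
  split; first exact: P2.
  split; first exact: P3.
  split; first exact: P4.
  exists Xg.
  split; first exact: X_inH'.
  split; first exact: (inf_of_inj _ xA xA_inj xA_X).
  split.
  { move=> M HM. have [s [hs E]] := factor M HM. exists s; split => // s' [hs' E'].
    apply: uf => //. by rewrite -E -E'. }
  split.
  { move=> M /factor [s [hs ->]]. elim/last_ind: s hs => [|s x IH] hs; first exact: reach_refl.
    have [hs1 hx] := allX_rcons _ _ hs.
    apply: (@reach_step _ _ (mprod s)); first exact: IH.
    exists x; split => //. exact: mprod_rcons. }
  split.
  { move=> g /factor [s [hs ->]] [x [hx E]].
    have := uf (rcons s x) [::] (allX_rcons' _ _ hs hx) (fun _ h => ltac:(by [])).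
    rewrite mprod_rcons -E => /(_ erefl). by case: s {hs E}. }
  split.
  { move=> h Hh hne. have [s [hs Es]] := factor h Hh.
    case/lastP: s hs Es => [|s x] hs Es; first by exfalso; apply: hne.
    have [hs1 hx] := allX_rcons _ _ hs.
    exists (mprod s); split.
    - split; first exact: mprod_inH'.
      exists x; split => //. by rewrite -mprod_rcons.
    - move=> g' [/factor [s' [hs' ->]] [x' [hx' E']]].
      have := uf (rcons s x) (rcons s' x') hs (allX_rcons' _ _ hs' hx').
      rewrite -Es E' mprod_rcons => /(_ erefl) /rcons_inj. by case => ->. }
  split; first exact: cancel_left.
  move=> g Hg. apply: (inf_of_inj _ (fun n => g *m xA n)).
  - move=> i j /(cancel_left g _ _ Hg (xA_X i) (xA_X j)). exact: xA_inj.
  - move=> n. exists (xA n); split => //; exact: xA_X.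
Qed.
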